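(* Let $\rho$ be an odd prime with $\rho\equiv\pm5\pmod{12}$ and $\mathrm{ord}_\rho(3)=\rho-1$, let $m=\rho-1$, let $\alpha$ be a primitive element of $\mathrm{GF}(3^m)$, $\beta=\alpha^{(3^m-1)/(4\rho)}$ and $\theta=\beta^{-1}$. Let $\mathcal{C}(\rho)$ be the ternary negacyclic code of length $2\rho$ whose check polynomial is the minimal polynomial of $\beta$ over $\mathrm{GF}(3)$; equivalently $$\mathcal{C}(\rho)=\left\{\left(\mathrm{Tr}_{3^m/3}(a\theta^i)\right)_{i=0}^{2\rho-1}: a\in\mathrm{GF}(3^m)\right\}.$$ Let $\overline{\mathcal{C}}(\rho)=\{(\mathrm{Tr}_{3^m/3^2}(a\theta^{2i}))_{i=0}^{\rho-1}: a\in\mathrm{GF}(3^m)\}$ (a linear code over $\mathrm{GF}(9)$). Then $\mathcal{C}(\rho)$ has parameters $[2\rho,\rho-1,d]$ where $d\ge d(\overline{\mathcal{C}}(\rho))\ge\sqrt{\rho}+1$.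
   Context: A ternary negacyclic code of length $n$ is an ideal of $\mathrm{GF}(3)[x]/(x^n+1)$ (codewords $(c_0,\dots,c_{n-1})\leftrightarrow\sum c_ix^i$); its check polynomial is $(x^n+1)/g(x)$, where $g$ is its monic generator polynomial. $\mathrm{Tr}_{3^m/3^k}$ denotes the trace from $\mathrm{GF}(3^m)$ to $\mathrm{GF}(3^k)$. $d(\cdot)$ is the minimum Hamming distance; $[n,k,d]$ denotes length, dimension, minimum distance. *)

(* Defs.v *)
From HB Require Import structures.
From mathcomp Require Import all_boot all_order all_algebra all_field.
Set Implicit Arguments. Unset Strict Implicit. Unset Printing Implicit Defensive.
Import Order.TTheory GRing.Theory Num.Theory.
Local Open Scope ring_scope.

Definition has_order_mod (r a k : nat) : Prop :=
  (0 < k)%N /\ (a ^ k = 1 %[mod r])%N /\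
  (forall j : nat, (0 < j < k)%N -> (a ^ j <> 1 %[mod r])%N).

Definition trace_to (F : finFieldType) (q m : nat) (x : F) : F :=
  \sum_(j < m) x ^+ (q ^ j).

Definition hwt (F : finFieldType) (n : nat) (w : {ffun 'I_n -> F}) : nat :=
  #|[set i | w i != 0]|.

(* minimum distance = minimum weight of a nonzero codeword (default n if none) *)
Definition min_dist (F : finFieldType) (n : nat) (C : {set {ffun 'I_n -> F}}) : nat :=
  \big[minn/n]_(c in C | c != 0) hwt c.

Definition code_C (F : finFieldType) (rho m : nat) (theta : F) : {set {ffun 'I_(2 * rho) -> F}} :=
  [set [ffun i : 'I_(2 * rho) => trace_to 3 m (a * theta ^+ i)] | a : F].

Definition code_Cbar (F : finFieldType) (rho m : nat) (theta : F) : {set {ffun 'I_rho -> F}} :=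
  [set [ffun i : 'I_rho => trace_to 9 (m %/ 2) (a * theta ^+ (2 * i))] | a : F].

(* Main.v *)
Require Import Defs.
From HB Require Import structures.
From mathcomp Require Import all_boot all_order all_algebra all_field.
From mathcomp Require Import ring zify.
Import Order.TTheory GRing.Theory Num.Theory.
Local Open Scope ring_scope.
Set Implicit Arguments. Unset Strict Implicit. Unset Printing Implicit Defensive.

Section Core.
Variable p : nat.
Hypothesis pr_p : prime p.
Hypothesis p_odd : odd p.
Variable F : fieldType.
Variable d : F.
Hypothesis dp : d ^+ p = 1.
Hypothesis d1 : d != 1.
Hypothesis two_nz : (2%:R : F) != 0.
Hypothesis p_nz : (p%:R : F) != 0.

Local Notation P := 'F_p.

Lemma valP_lt (x : P) : (nat_of_ord x < p)%N.
Proof. by apply: leq_trans (ltn_ord x) _; rewrite Fp_cast. Qed.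

Definition e (x : P) : F := d ^+ (nat_of_ord x).

Lemma dNp : d ^+ (Zp_trunc (pdiv p)).+2 = 1.
Proof. by rewrite Fp_cast. Qed.
Lemma dmod n : d ^+ (n %% (Zp_trunc (pdiv p)).+2) = d ^+ n.
Proof. exact: expr_mod dNp. Qed.

Lemma eD x y : e (x + y) = e x * e y.
Proof. by rewrite /e -exprD /= dmod. Qed.

Lemma eM x y : e (x * y) = d ^+ (x * y)%N.
Proof. by rewrite /e /= dmod. Qed.

Lemma e0 : e 0 = 1.
Proof. by rewrite /e expr0. Qed.

Lemma sum_e1 : \sum_(x : P) e x = 0.
Proof.
have : (d - 1) * \sum_(i < (Zp_trunc (pdiv p)).+2) d ^+ i = 0 by rewrite -subrX1 dNp subrr.
move/eqP; rewrite mulf_eq0 subr_eq0 (negbTE d1) /= => /eqP H.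
exact: H.
Qed.

Lemma sum_e s : \sum_(x : P) e (x * s) = (s == 0)%:R * p%:R.
Proof.
have [->|s0] := eqVneq s 0.
  under eq_bigr do rewrite mulr0 e0.
  by rewrite sumr_const card_Fp // mul1r.
by rewrite mul0r; have := sum_e1; rewrite (reindex_inj (mulIf s0)).
Qed.


Definition h := (p.-1)./2.

Lemma Fp_m1 : (-1 : P) != 1.
Proof.
apply/negP; move/eqP => H.
have : (2%:R : P) == 0 by rewrite -[2%N]/(1 + 1)%N natrD -{1}H addNr.
rewrite -(dvdn_pcharf (pchar_Fp pr_p)) => /dvdn_leq => /(_ isT).
have := prime_gt1 pr_p; case: p p_odd => [|[|[|]]] //.
Qed.

Lemma fermat (x : P) : x != 0 -> x ^+ p.-1 = 1.
Proof.
move=> x0; have : x ^+ p.-1.+1 = x by rewrite prednK ?prime_gt0 // -{2}(expf_card x) card_Fp.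
rewrite exprS.
by move/(congr1 (fun y => x^-1 * y)); rewrite mulrA mulVf // mul1r.
Qed.

Lemma hh : (h + h)%N = p.-1.
Proof.
rewrite addnn /h; have := odd_double_half p.-1.
have : ~~ odd p.-1 by move: p_odd; rewrite -{1}(prednK (prime_gt0 pr_p)) /=; case: (odd _).
by move/negbTE => ->.
Qed.

Lemma xh_pm (x : P) : x != 0 -> (x ^+ h == 1) || (x ^+ h == -1).
Proof. by move=> x0; rewrite -sqrf_eq1 -exprM muln2 -addnn hh fermat. Qed.

Definition chi (x : P) : F := if x == 0 then 0 else if x ^+ h == 1 then 1 else -1.

Lemma chiM x y : chi (x * y) = chi x * chi y.
Proof.
rewrite /chi; have [->|x0] := eqVneq x 0; first by rewrite mul0r eqxx mul0r.
have [->|y0] := eqVneq y 0; first by rewrite mulr0 eqxx mulr0.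
rewrite mulf_eq0 (negbTE x0) (negbTE y0) /= exprMn.
have := xh_pm x0; have := xh_pm y0.
case/orP => /eqP ->; case/orP => /eqP ->; rewrite ?mulr1 ?mul1r ?eqxx ?mulrNN ?mulr1 ?eqxx ?(negbTE Fp_m1) //.
by rewrite mulrNN mulr1.
Qed.

Lemma chi0 : chi 0 = 0. Proof. by rewrite /chi eqxx. Qed.
Lemma chi1 : chi 1 = 1. Proof. by rewrite /chi oner_eq0 expr1n eqxx. Qed.

Lemma chi_sq x : x != 0 -> chi x * chi x = 1.
Proof.
move=> x0; rewrite /chi (negbTE x0); case: ifP => _; by rewrite ?mulr1 ?mulrNN ?mulr1.
Qed.

Lemma chi_pm x : x != 0 -> (chi x = 1) \/ (chi x = -1).
Proof. by move=> x0; rewrite /chi (negbTE x0); case: ifP; [left|right]. Qed.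

Lemma chiV x : chi x^-1 = chi x.
Proof.
have [->|x0] := eqVneq x 0; first by rewrite invr0.
have : chi x * chi x^-1 = chi x * chi x by rewrite -chiM divff // chi1 chi_sq.
move/mulfI; apply; rewrite /chi (negbTE x0); case: ifP => _; by rewrite ?oner_eq0 ?oppr_eq0 ?oner_eq0.
Qed.

Lemma chi_neq0 x : x != 0 -> chi x != 0.
Proof. by move=> x0; rewrite /chi (negbTE x0); case: ifP; rewrite ?oppr_eq0 oner_eq0. Qed.

Lemma sum_chi (r : P) : chi r = -1 -> \sum_x chi x = 0.
Proof.
move=> cr.
have r0 : r != 0.
  by apply/eqP => r0; move: cr; rewrite r0 chi0 => /eqP; rewrite eq_sym oppr_eq0 oner_eq0.
have E : \sum_x chi x = - \sum_x chi x.
  rewrite {1}(reindex_inj (mulfI r0)) /=.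
  by rewrite -mulN1r mulr_sumr; apply: eq_bigr => x _; rewrite chiM cr.
have : 2%:R * \sum_x chi x = 0 by rewrite mulr_natl mulr2n {1}E addNr.
by move/eqP; rewrite mulf_eq0 (negbTE two_nz) /= => /eqP.
Qed.


Lemma eq_opp0 (x : F) : x = - x -> x = 0.
Proof.
move=> E; have : 2%:R * x = 0 by rewrite mulr_natl mulr2n {1}E addNr.
by move/eqP; rewrite mulf_eq0 (negbTE two_nz) /= => /eqP.
Qed.

Definition S (al be : P) := \sum_k chi k * e (al * k^-1 + be * k).

Lemma salie0 al be : al != 0 -> be != 0 -> chi (al * be) = -1 -> S al be = 0.
Proof.
move=> a0 b0 cab; apply: eq_opp0.
pose phi k := al * (be * k)^-1.
have phiK : involutive phi.
  move=> k; rewrite /phi.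
  have [->|k0] := eqVneq k 0; first by rewrite !(mulr0, invr0).
  by field; rewrite ?a0 ?b0 ?k0.
rewrite /S {1}(reindex_inj (can_inj phiK)) -sumrN; apply: eq_bigr => k _.
have [->|k0] := eqVneq k 0; first by rewrite /phi mulr0 invr0 mulr0 chi0 !mul0r oppr0.
rewrite /phi chiM chiV chiM mulrA -chiM cab.
rewrite mulN1r mulNr; congr (- (_ * e _)).
by field; rewrite ?a0 ?b0 ?k0.
Qed.

Definition G := \sum_k chi k * e k.

Lemma sum_chi_inv c : c != 0 -> \sum_k chi k * e (c * k^-1) = chi c * G.
Proof.
move=> c0; pose phi k := c * k^-1.
have phiK : involutive phi.
  move=> k; rewrite /phi.
  have [->|k0] := eqVneq k 0; first by rewrite !(mulr0, invr0).
  by field; rewrite ?c0 ?k0.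
rewrite (reindex_inj (can_inj phiK)) /G mulr_sumr; apply: eq_bigr => k _.
rewrite /phi chiM chiV mulrA; congr (_ * e _).
have [->|k0] := eqVneq k 0; first by rewrite !(mulr0, invr0).
by field; rewrite ?c0 ?k0.
Qed.

Lemma G2 r : chi r = -1 -> G * G = chi (-1) * p%:R.
Proof.
move=> cr.
have E1 : G * G = \sum_x \sum_t chi t * e (x * (1 + t)).
  rewrite /G mulr_suml; apply: eq_bigr => x _; rewrite mulr_sumr.
  have [->|x0] := eqVneq x 0.
    rewrite chi0; under eq_bigr do rewrite !mul0r.
    rewrite big1 //; under eq_bigr do rewrite mul0r e0 mulr1.
    by rewrite (sum_chi cr).
  rewrite (reindex_inj (mulfI x0)); apply: eq_bigr => t _.
  rewrite chiM mulrDr mulr1 eD.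
  have := chi_sq x0; move: (chi x) (chi t) (e x) (e (x * t)) => a b c d' H.
  by transitivity (a * a * (b * (c * d'))); [ring | rewrite H mul1r].
rewrite E1 exchange_big /=.
under eq_bigr => t _ do rewrite -mulr_sumr sum_e.
rewrite (bigD1 (-1)) //= addrN eqxx mul1r big1 ?addr0 // => t Ht.
by rewrite (_ : (1 + t == 0) = false) ?mul0r ?mulr0 //; apply/negbTE; apply: contra Ht; rewrite addrC addr_eq0.
Qed.

Lemma G_neq0 r : chi r = -1 -> G != 0.
Proof.
move=> cr; apply/eqP => G0; have := G2 cr; rewrite G0 mul0r => /eqP.
by rewrite eq_sym mulf_eq0 (negbTE p_nz) orbF (negbTE (chi_neq0 _)) // oppr_eq0 oner_eq0.
Qed.


Section ThmA.
Variable n : nat.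
Variable q : 'I_n -> P.
Variable b : 'I_n -> F.
Hypothesis hq : forall i, chi (q i) = 1.
Variable r : P.
Hypothesis cr : chi r = -1.

Definition f (k : P) := \sum_i b i * e (q i * k).
Definition u (k : P) := chi k * f (- k^-1).
Definition uh (m : P) := \sum_k u k * e (m * k).

Lemma q_neq0 i : q i != 0.
Proof. by apply/eqP => q0; move: (hq i); rewrite q0 chi0 => /eqP; rewrite eq_sym oner_eq0. Qed.

Lemma uh_zero m : chi (- m) = -1 -> uh m = 0.
Proof.
move=> cm.
have m0 : m != 0.
  by apply/eqP => m0; move: cm; rewrite m0 oppr0 chi0 => /eqP; rewrite eq_sym oppr_eq0 oner_eq0.
rewrite /uh /u /f.
under eq_bigr => k _ do rewrite mulr_sumr mulr_suml.
rewrite exchange_big /=; apply: big1 => i _.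
transitivity (b i * S (- q i) m).
  rewrite /S mulr_sumr; apply: eq_bigr => k _; rewrite eD mulrN mulNr.
  move: (chi k) (b i) (e _) (e _) => w x y z; ring.
rewrite salie0 ?mulr0 ?oppr_eq0 ?q_neq0 //.
by rewrite mulNr -mulrN chiM hq cm mul1r.
Qed.

Lemma uh0 : uh 0 = chi (-1) * G * f 0.
Proof.
rewrite /uh /u /f.
under eq_bigr => k _ do rewrite mul0r e0 mulr1 mulr_sumr.
rewrite exchange_big /= mulr_sumr; apply: eq_bigr => i _.
under eq_bigr => k _ do rewrite mulrN -mulNr.
transitivity (b i * \sum_k chi k * e (- q i * k^-1)).
  by rewrite mulr_sumr; apply: eq_bigr => k _; move: (chi k) (b i) (e _) => w x y; ring.
rewrite sum_chi_inv ?oppr_eq0 ?q_neq0 //.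
have -> : - q i = -1 * q i by rewrite mulN1r.
rewrite chiM hq mulr1 mulr0 e0 mulr1.
by move: (chi _) (b i) G => w x y; ring.
Qed.

Definition Pp (s : P) := \sum_j u (s - r * j) * u j.

Lemma Pp_hat m : \sum_s Pp s * e (m * s) = uh m * uh (m * r).
Proof.
rewrite /Pp; under eq_bigr => s _ do rewrite mulr_suml.
rewrite exchange_big /= [uh (m * r)]/uh mulr_sumr; apply: eq_bigr => j _.
rewrite (reindex_inj (addIr (r * j))) /= /uh mulr_suml; apply: eq_bigr => s _.
rewrite addrK mulrDr eD.
have -> : m * (r * j) = m * r * j by rewrite mulrA.
by move: (u s) (u j) (e _) (e _) => w x y z; ring.
Qed.

Lemma Pp_const s : p%:R * Pp s = uh 0 * uh 0.
Proof.
have E : \sum_m (\sum_s' Pp s' * e (m * s')) * e (m * (- s)) = p%:R * Pp s.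
  under eq_bigr => m _ do rewrite mulr_suml.
  rewrite exchange_big /=.
  under eq_bigr => s' _ do (under eq_bigr => m _ do rewrite -mulrA -eD -mulrDr mulrC; rewrite -mulr_suml sum_e).
  rewrite (bigD1 s) //= subrr eqxx mul1r big1 ?addr0 1?mulrC //.
  by move=> s' Hs; rewrite subr_eq0 (negbTE Hs) !mul0r.
rewrite -E; under eq_bigr => m _ do rewrite Pp_hat.
rewrite (bigD1 0) //= !mul0r e0 mulr1 big1 ?addr0 // => m m0.
have mm0 : - m != 0 by rewrite oppr_eq0.
case: (chi_pm mm0) => cm; first last.
  by rewrite uh_zero // !mul0r.
rewrite (@uh_zero (m * r)) ?mulr0 ?mul0r //.
by rewrite -mulNr chiM cm cr mul1r.
Qed.

Lemma uh0_neq0 : f 0 != 0 -> uh 0 != 0.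
Proof.
move=> f0; rewrite uh0 !mulf_neq0 // ?(G_neq0 cr) //.
by apply: chi_neq0; rewrite oppr_eq0 oner_eq0.
Qed.


Lemma Pp_neq0 s : f 0 != 0 -> Pp s != 0.
Proof.
move=> f0; apply/eqP => P0; have := Pp_const s; rewrite P0 mulr0 => /eqP.
by rewrite eq_sym mulf_eq0 orbb (negbTE (uh0_neq0 f0)).
Qed.

Lemma chi_eq0 k : (chi k == 0) = (k == 0).
Proof.
have [->|k0] := eqVneq k 0; first by rewrite chi0 eqxx.
by rewrite (negbTE (chi_neq0 k0)).
Qed.

Lemma thmA : f 0 != 0 -> (p <= (#|[set k | f k != 0%R]| - 1) ^ 2)%N.
Proof.
move=> f0.
set A := [set k | u k != 0].
have H1 : (p <= #|A| ^ 2)%N.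
  have sub : [set: P] \subset (fun ij : P * P => ij.1 + r * ij.2) @: setX A A.
    apply/subsetP => s _.
    have := Pp_neq0 s f0; rewrite /Pp.
    case: (pickP (fun j => u (s - r * j) * u j != 0)) => [j Hj | H0].
      move=> _; apply/imsetP; exists (s - r * j, j).
        by rewrite inE /= !inE; move: Hj; rewrite mulf_eq0 negb_or.
      by rewrite /= subrK.
    by rewrite big1 ?eqxx // => j _; move/negbFE: (H0 j) => /eqP.
  have := subset_leq_card sub; rewrite cardsT card_Fp // => /leq_trans; apply.
  by rewrite (leq_trans (leq_imset_card _ _)) // cardsX expnS expn1.
have H2 : #|A| = (#|[set k | f k != 0%R]| - 1)%N.
  pose g := fun k : P => - k^-1.
  have gK : involutive g by move=> k; rewrite /g invrN invrK opprK.
  have -> : A = g @: [set m | (m != 0) && (f m != 0)].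
    rewrite (can2_imset_pre _ gK gK); apply/setP => k; rewrite !inE /u /g.
    by rewrite mulf_eq0 negb_or oppr_eq0 invr_eq0 chi_eq0.
  rewrite card_imset; last exact: can_inj gK.
  have -> : [set k | f k != 0] = 0 |: [set m | (m != 0) && (f m != 0)].
    apply/setP => k; rewrite !inE; have [->|k0] := eqVneq k 0; by rewrite ?f0 ?eqxx.
  by rewrite cardsU1 !inE eqxx /= add1n subn1.
by rewrite -H2.
Qed.

End ThmA.

Lemma fourier_m1 n (q : 'I_n -> P) (b : 'I_n -> F) :
  \sum_k (\sum_i b i * e (q i * k)) * e (-1 * k) = p%:R * \sum_(i | q i == 1) b i.
Proof.
under eq_bigr => k _ do rewrite mulr_suml.
rewrite exchange_big /= [in RHS]big_mkcond [RHS]mulr_sumr; apply: eq_bigr => i _.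
transitivity (b i * \sum_k e (k * (q i - 1))).
  rewrite mulr_sumr; apply: eq_bigr => k _; rewrite -mulrA -eD; congr (_ * e _); ring.
rewrite sum_e subr_eq0; case: (q i == 1); by rewrite ?mul1r ?mul0r ?mulr0 // mulrC.
Qed.


End Core.

Lemma bigmin_le (I : eqType) (r : seq I) (P : pred I) (F : I -> nat) i0 x :
  x \in r -> P x -> (\big[minn/i0]_(y <- r | P y) F y <= F x)%N.
Proof.
elim: r => // y r IH; rewrite inE big_cons => /orP [/eqP <- Px | xr Px].
  by rewrite Px; exact: geq_minl.
case: ifP => _; last exact: IH.
exact: leq_trans (geq_minr _ _) (IH xr Px).
Qed.

Section Main.
Variable rho : nat.
Hypothesis pr : prime rho.
Hypothesis odd_rho : odd rho.
Hypothesis r12 : (rho %% 12 = 5 \/ rho %% 12 = 7)%N.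
Hypothesis ho3 : (3 ^ rho.-1 = 1 %[mod rho])%N /\ (forall j : nat, (0 < j < rho.-1)%N -> (3 ^ j <> 1 %[mod rho])%N).
Variable F : finFieldType.
Variable alpha : F.
Hypothesis cardF : #|F| = (3 ^ rho.-1)%N.
Hypothesis prim : (#|F|.-1).-primitive_root alpha.

Local Notation m := rho.-1.
Definition NN := (3 ^ m - 1)%N.
Definition KK := (NN %/ (4 * rho))%N.
Definition beta := alpha ^+ KK.
Definition theta := beta^-1.
Definition io := theta ^+ rho.
Definition delta := - theta ^+ 2.

Lemma rho_gt4 : (4 < rho)%N.
Proof. case: r12 => H; lia. Qed.

Lemma ch3 : (3%N \in [pchar F]).
Proof. exact: (card_finPcharP cardF). Qed.

Lemma rhoF : (rho%:R : F) != 0.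
Proof.
rewrite -(dvdn_pcharf ch3); apply/negP => /dvdnP [k Hk]; case: r12 => H; lia.
Qed.

Lemma twoF : (2%:R : F) != 0.
Proof. by rewrite -(dvdn_pcharf ch3). Qed.

Lemma NN_card : #|F|.-1 = NN.
Proof. by rewrite cardF /NN subn1. Qed.

Lemma m_even : m = (m %/ 2 + m %/ 2)%N.
Proof. have := rho_gt4; move: odd_rho; rewrite -{1}(prednK (prime_gt0 pr)) /= => H _.
have := odd_double_half m; rewrite (negbTE H) add0n -addnn divn2 => E. by rewrite {1}(esym E). Qed.

Lemma dvd_NN : (4 * rho %| NN)%N.
Proof.
have c4 : coprime 4 rho by rewrite (@coprime_pexpl 2 2 rho) // coprime2n.
rewrite Gauss_dvd // /NN -!eqn_mod_dvd ?expn_gt0 //; apply/andP; split; last first.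
  by apply/eqP; rewrite (proj1 ho3).
rewrite m_even addnn -muln2 mulnC expnM -modnXm /= exp1n.
by [].
Qed.

Lemma KK_gt0 : (0 < KK)%N.
Proof.
rewrite /KK divn_gt0; last by rewrite muln_gt0 (prime_gt0 pr).
apply: dvdn_leq; last exact: dvd_NN.
rewrite /NN subn_gt0 -{1}(expn0 3) ltn_exp2l //; have := rho_gt4; lia.
Qed.

Lemma KK_eq : (KK * (4 * rho))%N = NN.
Proof. exact: divnK dvd_NN. Qed.

Lemma alpha_exp_eq1 k : (alpha ^+ k == 1) = (NN %| k)%N.
Proof. by rewrite -(prim_order_dvd prim) NN_card. Qed.

Lemma beta4 : beta ^+ (4 * rho) = 1.
Proof. by apply/eqP; rewrite /beta -exprM alpha_exp_eq1 KK_eq. Qed.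

Lemma beta2 : beta ^+ (2 * rho) = -1.
Proof.
have : (beta ^+ (2 * rho)) ^+ 2 == 1 by rewrite -exprM (_ : (2 * rho * 2 = 4 * rho)%N) ?beta4 //; lia.
rewrite sqrf_eq1 => /orP [/eqP H|/eqP //].
exfalso; move: H => /eqP; rewrite /beta -exprM alpha_exp_eq1 -KK_eq => /dvdn_leq.
have := KK_gt0; have := rho_gt4; have H := KK_gt0; nia.
Qed.

Lemma theta2 : theta ^+ (2 * rho) = -1.
Proof. by rewrite /theta exprVn beta2 invrN1. Qed.

Lemma iota2 : io * io = -1.
Proof. by rewrite /io -exprD addnn -mul2n theta2. Qed.

Lemma iota9 : io ^+ 9 = io.
Proof.
have E : io ^+ 9 = io * (io * io) ^+ 4 by rewrite -expr2 -exprM -exprS.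
by rewrite E iota2 -signr_odd /= expr0 mulr1.
Qed.

Lemma iota_neq0 : io != 0.
Proof. by apply/eqP => i0; have := iota2; rewrite i0 mul0r => /eqP; rewrite eq_sym oppr_eq0 oner_eq0. Qed.

Lemma delta_rho : delta ^+ rho = 1.
Proof.
rewrite /delta exprNn -signr_odd odd_rho -exprM theta2 expr1.
by rewrite mulrNN mulr1.
Qed.

Lemma delta_neq1 : delta != 1.
Proof.
apply/eqP => H.
have t2 : theta ^+ 2 = -1 by rewrite -[theta ^+ 2]opprK -/delta H.
have : beta ^+ 4 = 1.
  have : theta ^+ 4 = 1 by rewrite (_ : 4 = 2 * 2)%N // exprM t2 sqrrN expr1n.
  by rewrite /theta exprVn => /(congr1 GRing.inv); rewrite invrK invr1.
move/eqP; rewrite /beta -exprM alpha_exp_eq1 -KK_eq => /dvdn_leq.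
have := KK_gt0; have := rho_gt4; have H1 := KK_gt0; nia.
Qed.


Lemma frob3 k (x y : F) : (x + y) ^+ (3 ^ k) = x ^+ (3 ^ k) + y ^+ (3 ^ k).
Proof.
elim: k => [|k IH]; first by rewrite !expr1.
rewrite expnSr !exprM IH.
by have /= := rmorphD (pFrobenius_aut ch3) (x ^+ (3 ^ k)) (y ^+ (3 ^ k)); rewrite !pFrobenius_autE.
Qed.

Definition T (x : F) := trace_to 9 (m %/ 2) x.

Lemma nine t : (9 ^ t = 3 ^ (2 * t))%N.
Proof. by rewrite expnM. Qed.

Lemma T_add x y : T (x + y) = T x + T y.
Proof. by rewrite /T /trace_to -big_split /=; apply: eq_bigr => t _; rewrite nine frob3. Qed.

Lemma T_scale c x : c ^+ 9 = c -> T (c * x) = c * T x.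
Proof.
move=> c9; rewrite /T /trace_to mulr_sumr; apply: eq_bigr => t _; rewrite exprMn.
congr (_ * _); elim: (nat_of_ord t) => [|k IH]; first by rewrite expr1.
by rewrite expnSr exprM IH.
Qed.

Lemma Tr3_gen h (x : F) : \sum_(0 <= j < h + h) x ^+ (3 ^ j) =
  \sum_(0 <= t < h) x ^+ (9 ^ t) + (\sum_(0 <= t < h) x ^+ (9 ^ t)) ^+ 3.
Proof.
elim: h => [|h IH]; first by rewrite !big_geq // expr0n /= addr0.
rewrite addnS addSn !big_nat_recr //= IH (frob3 1).
have e2 : (3 ^ (h + h) = 9 ^ h)%N by rewrite nine mul2n addnn.
have e3 : (3 ^ (h + h).+1 = 9 ^ h * 3)%N by rewrite expnSr e2.
rewrite expn1 e2 e3 exprM.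
move: (x ^+ _) (\sum_(0 <= i < h) _) => a c; ring.
Qed.

Lemma Tr3 x : trace_to 3 m x = T x + T x ^+ 3.
Proof.
rewrite /T /trace_to.
rewrite -(big_mkord xpredT (fun j => x ^+ (3 ^ j))) -(big_mkord xpredT (fun j => x ^+ (9 ^ j))).
by rewrite {1}m_even Tr3_gen. Qed.


Local Notation P := 'F_rho.
Local Notation E := (e delta).

Lemma e_nat i : E (i%:R : P) = delta ^+ i.
Proof. by rewrite /e val_Fp_nat // (expr_mod _ delta_rho). Qed.

Definition qq (t : 'I_(m %/ 2)) : P := (9 ^ t)%:R.
Definition bb (a : F) (t : 'I_(m %/ 2)) : F := a ^+ (9 ^ t).

Lemma f_T a k : f delta qq (bb a) k = T (a * E k).
Proof.
rewrite /f /T /trace_to; apply: eq_bigr => t _; rewrite /bb /qq exprMn (eM pr delta_rho) val_Fp_nat //.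
congr (_ * _); rewrite /e -exprM -(expr_mod _ delta_rho) modnMml (expr_mod _ delta_rho) mulnC //.
Qed.

Lemma pow3_neq0 t : ((3 ^ t)%:R : P) != 0.
Proof.
rewrite -(dvdn_pcharf (pchar_Fp pr)) Euclid_dvdX //; apply/negP => /andP [/dvdn_leq H _].
have := H isT; have := rho_gt4; lia.
Qed.

Lemma chi_qq t : chi F (qq t) = 1.
Proof.
rewrite /qq (_ : 9 ^ t = 3 ^ t * 3 ^ t)%N; last by rewrite -expnMn.
by rewrite natrM chiM ?chi_sq ?pow3_neq0.
Qed.

Lemma chi3 : chi F (3%:R : P) = -1.
Proof.
rewrite /chi (negbTE (pow3_neq0 1)) -natrX.
case: ifP => // /eqP H; exfalso.
have := congr1 (@nat_of_ord _) H; rewrite !val_Fp_nat //.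
move=> E3; apply: (proj2 ho3 (h rho)); last by rewrite E3 modn_small //; have := rho_gt4; lia.
rewrite /h -divn2; have := rho_gt4; lia.
Qed.

Lemma Tsign a i : (T (a * theta ^+ (2 * i)) != 0) = (T (a * delta ^+ i) != 0).
Proof.
rewrite exprM (_ : theta ^+ 2 = - delta); last by rewrite /delta opprK.
rewrite exprNn mulrCA T_scale ?mulf_eq0 ?signr_eq0 //.
by rewrite -exprM mulnC exprM (_ : (-1) ^+ 9 = -1 :> F) // -signr_odd.
Qed.

Lemma cnt n (Q : pred nat) : #|[set i : 'I_n | Q i]| = count Q (iota 0 n).
Proof.
rewrite cardsE cardE /enum_mem size_filter -val_enum_ord count_map.
by rewrite enumT; apply: eq_count => x.
Qed.


Lemma cntP (Q : pred nat) : #|[set k : P | Q k]| = count Q (iota 0 rho).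
Proof. by rewrite cnt Fp_cast. Qed.

Lemma wt_cbar a : #|[set i : 'I_rho | T (a * theta ^+ (2 * i)) != 0]| = #|[set k : P | T (a * E k) != 0]|.
Proof.
rewrite (cnt rho (fun i => T (a * theta ^+ (2 * i)) != 0)).
rewrite (_ : [set k : P | T (a * E k) != 0] = [set k : P | (fun i => T (a * delta ^+ i) != 0) k]) ?cntP.
  rewrite (cntP (fun i => T (a * delta ^+ i) != 0)); by apply: eq_count => i /=; rewrite Tsign.
by apply/setP => k; rewrite !inE.
Qed.

Lemma cbar_bound a (i0 : 'I_rho) : T (a * theta ^+ (2 * i0)) != 0 ->
  (rho <= (#|[set i : 'I_rho | T (a * theta ^+ (2 * i)%N)%R != 0%R]| - 1) ^ 2)%N.
Proof.
move=> H0; rewrite wt_cbar.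
pose k0 : P := (i0 : nat)%:R.
have Hk0 : T (a * E k0) != 0 by rewrite e_nat -Tsign.
pose a' := a * E k0.
have := thmA pr odd_rho delta_rho delta_neq1 twoF rhoF (q := qq) (b := bb a') chi_qq chi3.
rewrite f_T e0 mulr1 => /(_ Hk0).
have -> : [set k | f delta qq (bb a') k != 0] = (fun k => k0 + k) @^-1: [set k : P | T (a * E k) != 0].
  by apply/setP => k; rewrite !inE f_T /a' -mulrA -(eD pr delta_rho).
by rewrite card_preimset //; apply: addrI.
Qed.

Lemma cbar_min : (rho <= (min_dist (code_Cbar rho m theta) - 1) ^ 2)%N.
Proof.
rewrite /min_dist; apply: (big_ind (fun x => rho <= (x - 1) ^ 2)%N).
- have := rho_gt4; nia.
- by move=> x y Hx Hy; rewrite /minn; case: ifP.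
- move=> c /andP [/imsetP [a _ ->] Hc].
  case: (pickP (fun i => [ffun i : 'I_rho => trace_to 9 (m %/ 2) (a * theta ^+ (2 * i))] i != 0)) => [i0 Hi0 | Hall]; last first.
    exfalso; move: Hc => /eqP; apply; apply/ffunP => i; rewrite !ffunE.
    by move: (Hall i); rewrite ffunE => /negbFE /eqP.
  rewrite /hwt (_ : [set i | _ != 0] = [set i : 'I_rho | T (a * theta ^+ (2 * i)) != 0]); last first.
    by apply/setP => i; rewrite !inE ffunE.
  by apply: (cbar_bound (i0 := i0)); move: Hi0; rewrite ffunE.
Qed.


Definition yy a (i : nat) := T (a * theta ^+ i).

Lemma yy_shift a i : yy a (i + rho) = io * yy a i.
Proof. rewrite /yy -T_scale ?iota9 // exprD /io; congr T; move: (theta ^+ i) (theta ^+ rho) => u v; ring. Qed.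

Lemma Z_or a i : yy a i != 0 ->
  (yy a i + yy a i ^+ 3 != 0) || (yy a (i + rho) + yy a (i + rho) ^+ 3 != 0).
Proof.
rewrite yy_shift; move: (yy a i) => y; apply: contraR; rewrite negb_or !negbK => /andP [/eqP H1 /eqP H2].
have i3 : io ^+ 3 = - io by rewrite exprS expr2 iota2 mulrN1.
have E : (2%:R * io) * y = io * (y + y ^+ 3) + (io * y + (io * y) ^+ 3).
  rewrite exprMn i3; ring.
move: E; rewrite H1 H2 mulr0 addr0 => /eqP; rewrite !mulf_eq0 (negbTE twoF) (negbTE iota_neq0) /=.
by [].
Qed.

Lemma yy_period a j k : (yy a (j + k * rho) != 0) = (yy a j != 0).
Proof.
elim: k => [|k IH]; first by rewrite mul0n addn0.
by rewrite mulSn addnCA addnC yy_shift mulf_eq0 negb_or iota_neq0.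
Qed.

Lemma yy_mod a n : (yy a (n %% rho) != 0) = (yy a n != 0).
Proof. by rewrite {2}(divn_eq n rho) addnC yy_period. Qed.

Lemma yy_modN a n : (yy a (n %% (Zp_trunc (pdiv rho)).+2) != 0) = (yy a n != 0).
Proof. by rewrite Fp_cast // yy_mod. Qed.

Definition wordC a := [ffun i : 'I_(2 * rho) => trace_to 3 m (a * theta ^+ i)].
Definition wordCb a := [ffun i : 'I_rho => trace_to 9 (m %/ 2) (a * theta ^+ (2 * i))].

Lemma two_P : (2%:R : P) != 0.
Proof.
rewrite -(dvdn_pcharf (pchar_Fp pr)); apply/negP => /dvdn_leq H.
by have := H isT; have := rho_gt4; lia.
Qed.

Lemma hwt_cb a : hwt (wordCb a) = count (fun j => yy a j != 0) (iota 0 rho).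
Proof.
rewrite /hwt (_ : [set i | wordCb a i != 0] = [set i : 'I_rho | yy a (2 * i) != 0]); last first.
  by apply/setP => i; rewrite !inE ffunE.
rewrite (cnt rho (fun i => yy a (2 * i) != 0)).
rewrite -(cntP (fun i => yy a (2 * i) != 0)) -(cntP (fun i => yy a i != 0)).
rewrite -[RHS](card_preimset _ (mulfI two_P)); apply: eq_card => k; rewrite !inE /=.
have N1 : (1 %% (Zp_trunc (pdiv rho)).+2 = 1)%N by rewrite modn_small // Fp_cast // prime_gt1.
by rewrite modnMml yy_modN N1.
Qed.

Lemma hwt_C_ge a : (count (fun j => yy a j != 0%R) (iota 0 rho) <= hwt (wordC a))%N.
Proof.
rewrite /hwt (_ : [set i | wordC a i != 0] = [set i : 'I_(2 * rho) | yy a i + yy a i ^+ 3 != 0]); last first.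
  by apply/setP => i; rewrite !inE ffunE Tr3.
have Hs : iota 0 (rho + rho) = iota 0 rho ++ map (addn rho) (iota 0 rho).
  by rewrite -iotaDl addn0 iotaD.
rewrite (cnt (2 * rho) (fun i => yy a i + yy a i ^+ 3 != 0)) mul2n -addnn Hs count_cat count_map.
pose Z := fun i => yy a i + yy a i ^+ 3 != 0. pose Z' := fun i => Z (rho + i)%N.
apply: (@leq_trans (count (predU Z Z') (iota 0 rho))).
  by apply: sub_count => j /= Hj; have := Z_or Hj; rewrite /Z' /Z /= (addnC rho j).
apply: (@leq_trans (count (predU Z Z') (iota 0 rho) + count (predI Z Z') (iota 0 rho))).
  exact: leq_addr.
by rewrite count_predUI.
Qed.

Lemma C_nz_cb_nz a : wordC a != 0 -> wordCb a != 0.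
Proof.
move=> Hc.
have [i Hi] : exists i : 'I_(2 * rho), wordC a i != 0.
  case: (pickP (fun i => wordC a i != 0)) => [i Hi | Hall]; first by exists i.
  by exfalso; move: Hc => /eqP; apply; apply/ffunP => i; rewrite [RHS]ffunE; move: (Hall i) => /negbFE /eqP.
have Hy : yy a i != 0.
  by move: Hi; rewrite ffunE Tr3; apply: contra => /eqP; rewrite /yy => ->; rewrite expr0n add0r.
have : (0 < hwt (wordCb a))%N.
  rewrite hwt_cb -has_count; apply/hasP; exists (i %% rho)%N.
    by rewrite mem_iota add0n ltn_pmod // prime_gt0.
  by rewrite /= yy_mod.
apply: contraTneq => ->; rewrite /hwt (_ : [set i | _] = set0) ?cards0 //.
by apply/setP => j; rewrite !inE ffunE eqxx.
Qed.


Lemma hwt0 n : hwt (0 : {ffun 'I_n -> F}) = 0%N.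
Proof. by rewrite /hwt (_ : [set i | _] = set0) ?cards0 //; apply/setP => i; rewrite !inE ffunE eqxx. Qed.

Lemma C_zero a : wordC a = 0 -> a = 0.
Proof.
move=> H0.
have Hc : count (fun j => yy a j != 0%R) (iota 0 rho) = 0%N.
  by apply/eqP; rewrite -leqn0; apply: leq_trans (hwt_C_ge a) _; rewrite H0 hwt0.
have Hall : forall j, yy a j = 0.
  move=> j; apply/eqP; rewrite -[_ == 0]negbK -yy_mod; apply/negP => Hj.
  have : has (fun j => yy a j != 0%R) (iota 0 rho).
    by apply/hasP; exists (j %% rho)%N => //; rewrite mem_iota add0n ltn_pmod // prime_gt0.
  by rewrite has_count Hc.
have Hf : forall k : P, f delta qq (bb a) k = 0.
  move=> k; rewrite f_T; apply/eqP; rewrite -[_ == 0]negbK; apply/negP => Hk.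
  by move: Hk; rewrite /e -Tsign -/(yy a _) Hall eqxx.
have := fourier_m1 pr delta_rho delta_neq1 qq (bb a).
rewrite big1 => [|k _]; last by move: (Hf k); rewrite /f => ->; rewrite mul0r.
have h0 : (0 < m %/ 2)%N by have := rho_gt4; lia.
rewrite (big_pred1 (Ordinal h0)) => [|t]; last first.
  apply/idP/eqP => [Ht|->]; last by rewrite /qq /= expn0.
  apply/val_inj => /=; apply/eqP; apply/negP => t0.
  have E9 : ((9 ^ t - 1)%N%:R : P) = (9 ^ t)%:R - 1 by rewrite natrB ?expn_gt0.
  move: Ht; rewrite /qq -subr_eq0 -E9 -(dvdn_pcharf (pchar_Fp pr)) -eqn_mod_dvd ?expn_gt0 //.
  move=> /eqP H9; apply: (proj2 ho3 (2 * t)%N); last by rewrite -nine H9.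
  have := ltn_ord t; have := rho_gt4; lia.
rewrite /bb /= expn0 expr1 => /esym/eqP; rewrite mulf_eq0 (negbTE rhoF) /=.
by move/eqP.
Qed.

Lemma Tr3B (x y : F) : trace_to 3 m (x - y) = trace_to 3 m x - trace_to 3 m y.
Proof.
have n3 : (-1) ^+ 9 = -1 :> F by rewrite -signr_odd.
rewrite !Tr3 T_add -mulN1r T_scale // mulN1r.
have f3 : (T x + - T y) ^+ 3 = T x ^+ 3 + (- T y) ^+ 3 := frob3 1 (T x) (- T y).
rewrite f3 exprNn -signr_odd /= expr1; move: (T x) (T y) (T x ^+ 3) (T y ^+ 3) => u v w z; ring.
Qed.

Lemma wordC_inj : injective wordC.
Proof.
move=> a b H; apply/eqP; rewrite -subr_eq0; apply/eqP/C_zero/ffunP => i.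
rewrite !ffunE mulrBl Tr3B; move/ffunP/(_ i): H; rewrite !ffunE => ->; by rewrite subrr.
Qed.

Lemma card_C : #|code_C rho m theta| = (3 ^ m)%N.
Proof.
rewrite /code_C card_imset; last exact: wordC_inj.
exact: cardF.
Qed.

Lemma min_cb_le_rho : (min_dist (code_Cbar rho m theta) <= rho)%N.
Proof.
rewrite /min_dist; apply: (big_ind (fun x => x <= rho)%N) => //.
- move=> x y Hx _; exact: leq_trans (geq_minl x y) Hx.
- by move=> c _; rewrite /hwt; apply: leq_trans (max_card _) _; rewrite card_ord.
Qed.

Lemma min_le_elem c : c \in code_Cbar rho m theta -> c != 0 ->
  (min_dist (code_Cbar rho m theta) <= hwt c)%N.
Proof.
by move=> Hc Hc0; rewrite /min_dist; apply: bigmin_le; rewrite ?mem_index_enum ?Hc ?Hc0.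
Qed.

Lemma part2 : (min_dist (code_Cbar rho m theta) <= min_dist (code_C rho m theta))%N.
Proof.
rewrite [min_dist (code_C _ _ _)]/min_dist.
apply: (big_ind (fun x => min_dist (code_Cbar rho m theta) <= x)%N).
- by apply: leq_trans min_cb_le_rho _; lia.
- by move=> x y Hx Hy; rewrite leq_min Hx Hy.
- move=> c /andP [/imsetP [a _ ->] Hc].
  have Hc' : wordC a != 0 := Hc.
  apply: leq_trans (min_le_elem (c := wordCb a) _ (C_nz_cb_nz Hc')) _.
    by apply/imsetP; exists a.
  by rewrite hwt_cb; exact: hwt_C_ge.
Qed.

End Main.

Lemma sqrt_bound (r w : nat) : (r <= (w - 1) ^ 2)%N -> (0 < r)%N -> sqrtC (r%:R : algC) + 1 <= w%:R.
Proof.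
move=> H r0; have w1 : (1 <= w)%N by case: w H => //; rewrite sub0n exp0n //; lia.
rewrite -(subnK w1) natrD lerD2r.
rewrite -[X in _ <= X](@sqrCK _ ((w - 1)%:R)) ?ler0n // ler_sqrtC ?qualifE ?ler0n //= -natrX ?ler0n //.
by rewrite ler_nat.
Qed.


Theorem theorem11 (rho : nat) (F : finFieldType) (alpha : F) :
  prime rho -> odd rho -> (rho %% 12 = 5 \/ rho %% 12 = 7)%N ->
  has_order_mod rho 3 rho.-1 ->
  #|F| = (3 ^ rho.-1)%N ->
  (#|F|.-1).-primitive_root alpha ->
  let m := rho.-1 in
  let beta := alpha ^+ ((3 ^ m - 1) %/ (4 * rho)) in
  let theta := beta^-1 in
  #|code_C rho m theta| = (3 ^ (rho.-1))%N /\
  (min_dist (code_Cbar rho m theta) <= min_dist (code_C rho m theta))%N /\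
  sqrtC (rho%:R : algC) + 1 <= (min_dist (code_Cbar rho m theta))%:R.
Proof.
move=> pr od r12 [_ ho3] cardF prim m beta theta.
rewrite /theta /beta /m.
split; first exact: (card_C pr od r12 ho3 cardF prim).
split; first exact: (part2 pr od r12 ho3 cardF prim).
apply: sqrt_bound; last exact: prime_gt0.
exact: (cbar_min pr od r12 ho3 cardF prim).
Qed.
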